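(* In the public bug bounty model described in the context, define $\Omega_\infty(\hat\kappa)=\sum_lw^l\mu^lq^le^{-q^l\hat\kappa}-\underline c$ and let $\tilde\kappa$ be its unique root in $[0,\infty)$. Then the optimal asymptotic participation, i.e. the maximizer of $$W_\infty(\hat\kappa)=\sum_lw^l\mu^l\big(1-e^{-q^l\hat\kappa}\big)-\hat\kappa\underline c$$ over $\hat\kappa\in[0,\kappa_a(\overline v)]$, is $\hat\kappa^*=\min\{\tilde\kappa,\kappa_a(\overline v)\}$, and any prizes $\boldsymbol v^\infty$, $v_a^\infty$ and complexity $q_a^\infty$ (satisfying $\sum_lv^l+v_a\le\overline v$, $v^l\ge0$, $v_a\ge0$, $q_a\in[0,1]$) that solve $\hat\kappa^*=\Psi_\infty(\hat\kappa^*;\boldsymbol v,v_a,q_a)$ are optimal.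
   Context: Public bug bounty model (limit of $n\to\infty$ agents). There are $L$ potential organic bugs; bug $l$ exists with probability $\mu^l\in(0,1]$ (independently), has complexity $q^l\in(0,1]$, and the designer values finding it at $w^l\ge0$. Agents' costs are i.i.d. from a fixed continuous distribution $F$ with full support $[\underline c,\overline c]$, $0<\underline c<\overline c\le\infty$, finite density $f$, $F/f$ non-decreasing. The designer has budget $\overline v>0$ with $\overline v\ge\underline c$, and $\sum_lw^l\mu^lq^l\ge\underline c$. Prizes $v^l\ge0$ for organic bugs, one artificial bug with prize $v_a\ge0$ and complexity $q_a\in[0,1]$. $\Psi_\infty(\hat\kappa;\boldsymbol v,v_a,q_a)=\sum_lv^l\mu^l\frac{1-e^{-q^l\hat\kappa}}{\underline c}+v_a\frac{1-e^{-q_a\hat\kappa}}{\underline c}$; for given prizes, the asymptotic participation is $\kappa^*=\lim_{n\to\infty}nF(c_n)$, with $c_n$ the symmetric equilibrium threshold with $n$ agents, and equals the largest fixed point of $\Psi_\infty$ in $[0,\infty)$; the designer's asymptotic payoff is $W_\infty(\kappa^* )$. $\kappa_a(\overline v)$ is the largest fixed point in $[0,\infty)$ of $\hat\kappa\mapsto\overline v(1-e^{-\hat\kappa})/\underline c$, and the set of achievable participations is $[0,\kappa_a(\overline v)]$. *)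

(* Defs.v *)
From mathcomp Require Import all_boot all_order all_algebra.
From mathcomp Require Import all_classical all_reals all_analysis.
Set Implicit Arguments. Unset Strict Implicit. Unset Printing Implicit Defensive.
Import Order.TTheory GRing.Theory Num.Theory.
Local Open Scope ring_scope.

Definition Psi_inf (R : realType) (L : nat) (mu q : 'I_L -> R) (cl : R)
  (v : 'I_L -> R) (va qa : R) (k : R) : R :=
  \sum_(l < L) v l * mu l * (1 - expR (- (q l * k))) / cl
  + va * (1 - expR (- (qa * k))) / cl.

Definition Omega_inf (R : realType) (L : nat) (mu q w : 'I_L -> R) (cl : R) (k : R) : R :=
  \sum_(l < L) w l * mu l * q l * expR (- (q l * k)) - cl.

Definition W_inf (R : realType) (L : nat) (mu q w : 'I_L -> R) (cl : R) (k : R) : R :=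
  \sum_(l < L) w l * mu l * (1 - expR (- (q l * k))) - k * cl.

(* the map k |-> vbar (1 - e^{-k}) / c whose largest fixed point is kappa_a(vbar) *)
Definition kappa_a_map (R : realType) (vbar cl : R) (k : R) : R :=
  vbar * (1 - expR (- k)) / cl.

Definition is_largest_fixed_point (R : realType) (f : R -> R) (k : R) : Prop :=
  [/\ 0 <= k, f k = k & forall x, 0 <= x -> f x = x -> x <= k].

(* budget-feasible prizes and artificial-bug complexity *)
Definition feasible (R : realType) (L : nat) (vbar : R)
  (v : 'I_L -> R) (va qa : R) : Prop :=
  [/\ forall l, 0 <= v l, 0 <= va, 0 <= qa <= 1 & \sum_(l < L) v l + va <= vbar].

(* Main.v *)
Require Import Defs.
From mathcomp Require Import all_boot all_order all_algebra.
From mathcomp Require Import all_classical all_reals all_analysis.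
From mathcomp Require Import ring lra.
Import Order.TTheory GRing.Theory Num.Theory.
Import numFieldNormedType.Exports.
Local Open Scope ring_scope.

Lemma tangent_term (R : realType) (q k s : R) :
  1 - expR (- (q * k)) <= 1 - expR (- (q * s)) + (k - s) * (q * expR (- (q * s))).
Proof.
have E : expR (- (q * k)) = expR (- (q * s)) * expR (- (q * (k - s))).
  by rewrite -expRD; congr expR; ring.
have h1 := expR_ge1Dx (- (q * (k - s))).
have h2 := expR_gt0 (- (q * s)).
rewrite E. nra.
Qed.

Lemma tangent_term_strict (R : realType) (q k s : R) :
  q != 0 -> k != s ->
  1 - expR (- (q * k)) < 1 - expR (- (q * s)) + (k - s) * (q * expR (- (q * s))).
Proof.
move=> hq hks.
have E : expR (- (q * k)) = expR (- (q * s)) * expR (- (q * (k - s))).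
  by rewrite -expRD; congr expR; ring.
have h1 : 1 + (- (q * (k - s))) < expR (- (q * (k - s))).
  apply: expR_gt1Dx; rewrite oppr_eq0 mulf_neq0 // subr_eq0 //.
have h2 := expR_gt0 (- (q * s)).
rewrite E. nra.
Qed.

Lemma W_decomp (R : realType) (L : nat) (mu q w : 'I_L -> R) (cl k s : R) :
  W_inf mu q w cl s + (k - s) * Omega_inf mu q w cl s =
  \sum_(l < L) (w l * mu l * (1 - expR (- (q l * s)))
               + w l * mu l * ((k - s) * (q l * expR (- (q l * s))))) - k * cl.
Proof.
rewrite /W_inf /Omega_inf big_split /=.
have -> : \sum_(l < L) w l * mu l * ((k - s) * (q l * expR (- (q l * s)))) =
          (k - s) * \sum_(l < L) w l * mu l * q l * expR (- (q l * s)).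
  rewrite mulr_sumr; apply: eq_bigr => l _; ring.
ring.
Qed.

Lemma W_tangent (R : realType) (L : nat) (mu q w : 'I_L -> R) (cl k s : R) :
  (forall l, 0 <= w l * mu l) ->
  W_inf mu q w cl k <= W_inf mu q w cl s + (k - s) * Omega_inf mu q w cl s.
Proof.
move=> hwm; rewrite W_decomp /W_inf lerB // ler_sum // => l _.
rewrite -mulrDr ler_wpM2l //; exact: tangent_term.
Qed.

Lemma W_tangent_strict (R : realType) (L : nat) (mu q w : 'I_L -> R) (cl k s : R) (l0 : 'I_L) :
  (forall l, 0 <= w l * mu l) -> 0 < w l0 * mu l0 * q l0 -> k != s ->
  W_inf mu q w cl k < W_inf mu q w cl s + (k - s) * Omega_inf mu q w cl s.
Proof.
move=> hwm hl0 hks; rewrite W_decomp /W_inf ltrBlDr subrK.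
rewrite (bigD1 l0) //= [X in _ < X](bigD1 l0) //=.
apply: ltr_leD.
  rewrite -mulrDr ltr_pM2l; last first.
    by rewrite lt_neqAle hwm andbT eq_sym; apply/eqP => h; move: hl0; rewrite h mul0r ltxx.
  apply: tangent_term_strict => //.
  by apply/eqP => h; move: hl0; rewrite h mulr0 ltxx.
apply: ler_sum => l _; rewrite -mulrDr ler_wpM2l //; exact: tangent_term.
Qed.

Lemma Omega_strict (R : realType) (L : nat) (mu q w : 'I_L -> R) (cl x y : R) (l0 : 'I_L) :
  (forall l, 0 <= w l * mu l) -> (forall l, 0 < q l) -> 0 < w l0 * mu l0 * q l0 -> x < y ->
  Omega_inf mu q w cl y < Omega_inf mu q w cl x.
Proof.
move=> hwm hq hl0 hxy; rewrite /Omega_inf ltrBlDr subrK.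
rewrite (bigD1 l0) //= [X in _ < X](bigD1 l0) //=.
apply: ltr_leD.
  by rewrite ltr_pM2l // ltr_expR ltrN2 ltr_pM2l.
apply: ler_sum => l _; rewrite ler_wpM2l ?(mulr_ge0 (hwm l) (ltW (hq l))) //.
by rewrite ler_expR lerN2 ler_wpM2l ?(ltW (hq l)) // ltW.
Qed.

Lemma Psi_le (R : realType) (L : nat) (mu q : 'I_L -> R) (cl vbar : R)
  (v : 'I_L -> R) (va qa x : R) :
  (forall l, 0 < mu l <= 1) -> (forall l, 0 < q l <= 1) -> 0 < cl ->
  feasible vbar v va qa -> 0 <= x ->
  Psi_inf mu q cl v va qa x <= kappa_a_map vbar cl x.
Proof.
move=> hmu hq hcl [hv hva /andP[hqa0 hqa1] hs] hx.
have key : forall r, 0 <= r <= 1 -> 0 <= 1 - expR (- (r * x)) <= 1 - expR (- x).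
  move=> r /andP[r0 r1]; apply/andP; split.
    rewrite subr_ge0 -expR0 ler_expR lerNl oppr0; exact: mulr_ge0.
  rewrite lerD2l lerN2 ler_expR lerN2; nra.
have hE : 0 <= 1 - expR (- x).
  by have /andP[h1 h2] := key 1 ltac:(by rewrite ler01 lexx); apply: le_trans h2.
have hci : 0 <= cl^-1 by rewrite invr_ge0 ltW.
rewrite /Psi_inf /kappa_a_map.
apply: (@le_trans _ _ ((\sum_(l < L) v l) * (1 - expR (- x)) / cl + va * (1 - expR (- x)) / cl)).
  apply: lerD; last first.
    rewrite ler_wpM2r // ler_wpM2l //.
    by have /andP[_ ->] := key qa ltac:(by rewrite hqa0 hqa1).
  rewrite !mulr_suml; apply: ler_sum => l _.
  rewrite ler_wpM2r // -mulrA ler_wpM2l //.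
  have /andP[h0 hm1] := hmu l. have /andP[hq0 hq1] := hq l.
  have /andP[k0 k1] := key (q l) ltac:(by rewrite ltW // hq1).
  nra.
rewrite -mulrDl ler_wpM2r // -mulrDl ler_wpM2r //.
Qed.

Lemma fixed_le_ka (R : realType) (L : nat) (mu q : 'I_L -> R) (cl vbar : R)
  (v : 'I_L -> R) (va qa k ka : R) :
  (forall l, 0 < mu l <= 1) -> (forall l, 0 < q l <= 1) -> 0 < cl -> cl <= vbar ->
  is_largest_fixed_point (kappa_a_map vbar cl) ka ->
  feasible vbar v va qa ->
  is_largest_fixed_point (Psi_inf mu q cl v va qa) k -> k <= ka.
Proof.
move=> hmu hq hcl hvb [ka0 kafix kamax] hf [k0 kfix _].
rewrite leNgt; apply/negP => hlt.
have hk : k <= kappa_a_map vbar cl k.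
  by rewrite -{1}kfix; apply: Psi_le.
pose f := fun x => kappa_a_map vbar cl x - x.
pose M := k + vbar / cl.
have hvc : 0 <= vbar / cl by rewrite divr_ge0 // ltW // (lt_le_trans hcl).
have hkM : k <= M by rewrite /M lerDl.
have fM : f M < 0.
  rewrite /f /kappa_a_map subr_lt0.
  have : vbar * (1 - expR (- M)) / cl < vbar / cl.
    rewrite ltr_pM2r ?invr_gt0 // gtr_pMr ?(lt_le_trans hcl) //.
    by rewrite ltrBlDr ltrDl expR_gt0.
  move=> h; apply: (lt_le_trans h); rewrite /M lerDr //.
have fk : 0 <= f k by rewrite /f subr_ge0.
have cf0 : continuous f.
  move=> x; rewrite /f /kappa_a_map.
  apply: cvgB; last exact: cvg_id.
  apply: cvgM; last exact: cvg_cst.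
  apply: cvgM; first exact: cvg_cst.
  apply: cvgB; first exact: cvg_cst.
  apply: (continuous_comp (f := fun x : R => - x)); first exact: oppr_continuous.
  exact: continuous_expR.
have cf : {within `[k, M], continuous f}%classic by exact: continuous_subspaceT.
have [c /andP[] hc1 hc2 fc] := @IVT R f k M 0 hkM cf
  ltac:(by rewrite ge_min le_max (ltW fM) fk orbT).
have : c <= ka.
  apply: kamax; first exact: (le_trans k0 hc1).
  by move: fc; rewrite /f => /eqP; rewrite subr_eq0 => /eqP.
move=> hcka; have := lt_le_trans hlt hc1; rewrite ltNge hcka //.
Qed.

Theorem theorem3 (R : realType) (L : nat) (mu q w : 'I_L -> R) (cl vbar : R)
  (hmu : forall l, 0 < mu l <= 1)
  (hq : forall l, 0 < q l <= 1)
  (hw : forall l, 0 <= w l)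
  (hcl : 0 < cl)
  (hvbar : cl <= vbar)
  (hsum : cl <= \sum_(l < L) w l * mu l * q l)
  (kt ka : R)
  (hkt : 0 <= kt /\ Omega_inf mu q w cl kt = 0)
  (hka : is_largest_fixed_point (kappa_a_map vbar cl) ka) :
  let ks := Num.min kt ka in
  [/\ (forall x, 0 <= x -> Omega_inf mu q w cl x = 0 -> x = kt),
      0 <= ks <= ka,
      (forall k, 0 <= k <= ka -> W_inf mu q w cl k <= W_inf mu q w cl ks),
      (forall k, 0 <= k <= ka -> W_inf mu q w cl k = W_inf mu q w cl ks -> k = ks) &
      (forall (v : 'I_L -> R) (va qa : R),
         feasible vbar v va qa ->
         is_largest_fixed_point (Psi_inf mu q cl v va qa) ks ->
         forall (v' : 'I_L -> R) (va' qa' k' : R),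
           feasible vbar v' va' qa' ->
           is_largest_fixed_point (Psi_inf mu q cl v' va' qa') k' ->
           W_inf mu q w cl k' <= W_inf mu q w cl ks)].
Proof.
move=> ks.
have [kt0 Okt] := hkt.
have hka' := hka; case: hka' => [ka0 _ _].
have hwm : forall l, 0 <= w l * mu l.
  by move=> l; have /andP[h _] := hmu l; rewrite mulr_ge0 // ltW.
have hqp : forall l, 0 < q l by move=> l; have /andP[] := hq l.
have [l0 hl0] : exists l, 0 < w l * mu l * q l.
  case: (pselect (exists l, 0 < w l * mu l * q l)) => // H; exfalso.
  have : \sum_(l < L) w l * mu l * q l <= 0.
    apply: sumr_le0 => l _; rewrite leNgt; apply/negP => h; apply: H; by exists l.
  move=> h; have := lt_le_trans hcl (le_trans hsum h); rewrite ltxx.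
  done.
have Ostr := fun x y => @Omega_strict R L mu q w cl x y l0 hwm hqp hl0.
have uniq : forall x, 0 <= x -> Omega_inf mu q w cl x = 0 -> x = kt.
  move=> x _ Ox; case: (ltgtP x kt) => // h.
    by have := Ostr _ _ h; rewrite Ox Okt ltxx.
  by have := Ostr _ _ h; rewrite Ox Okt ltxx.
have ks0 : 0 <= ks <= ka by rewrite /ks ge_min lexx orbT le_min kt0 ka0.
have key : forall k, 0 <= k <= ka -> (k - ks) * Omega_inf mu q w cl ks <= 0.
  move=> k /andP[k0 kka]; rewrite /ks.
  case: (leP kt ka) => h.
    by rewrite Okt mulr0.
  have : 0 < Omega_inf mu q w cl ka by rewrite -Okt; apply: Ostr.
  move=> hO; rewrite mulr_le0_ge0 ?subr_le0 // ltW //.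
have part3 : forall k, 0 <= k <= ka -> W_inf mu q w cl k <= W_inf mu q w cl ks.
  move=> k hk; apply: (le_trans (@W_tangent R L mu q w cl k ks hwm)).
  by rewrite gerDl key.
split => //.
- move=> k hk hW; apply/eqP; apply/negPn/negP => hne.
  have := @W_tangent_strict R L mu q w cl k ks l0 hwm hl0 hne.
  rewrite hW => h; have := key k hk; rewrite leNgt.
  by rewrite -(ltrD2l (W_inf mu q w cl ks)) addr0 h.
- move=> v va qa _ _ v' va' qa' k' hf' hfix.
  apply: part3; apply/andP; split.
    by case: hfix.
  exact: (@fixed_le_ka R L mu q cl vbar v' va' qa' k' ka hmu hq hcl hvbar hka hf' hfix).
Qed.
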